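(* Let $N\in\mathbb Z$, let $q_0,\dots,q_{T-1}\in\mathbb Z$, and let $Q_0,\dots,Q_{T-1}\in\mathbb Q$ satisfy $Q_i-Q_j\notin\mathbb Z$ for all $i\neq j$. Then the diagonal map $f\mapsto(f,\dots,f)$ induces an isomorphism of vector spaces $$\mathbb C[z,z^{-1}]\Big/\bigcap_{s=0}^{T-1}O(N,Q_s,q_s;z)\ \xrightarrow{\ \sim\ }\ \bigoplus_{s=0}^{T-1}\mathbb C[z,z^{-1}]/O(N,Q_s,q_s;z).$$
   Context: $T$ is a positive integer. For $N,q\in\mathbb Z$ and $Q\in\mathbb Q$, $O(N,Q,q;z)$ is the subspace of $\mathbb C[z,z^{-1}]$ spanned by the monomials $z^i$ with $i\ge N+1$ together with the Laurent polynomials $\sum_{i=0}^{N-q-j}\binom Qi z^{i+q+j}$ for $j=0,-1,-2,\dots$. *)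

(* Defs.v *)
(* Laurent polynomials C[z,z^-1] are represented by their
   coefficient functions int -> algC (with finite support). *)
From HB Require Import structures.
From mathcomp Require Import all_boot all_order all_algebra all_field.
Set Implicit Arguments. Unset Strict Implicit. Unset Printing Implicit Defensive.
Import Order.TTheory GRing.Theory Num.Theory.
Local Open Scope ring_scope.

Definition laurent := int -> algC.

Definition is_laurent (f : laurent) : Prop :=
  exists M : nat, forall e : int, (M < `|e|)%N -> f e = 0.

Definition mono (i : int) : laurent := fun e => if e == i then 1 else 0.

Definition binomQ (Q : rat) (i : nat) : algC :=
  ratr ((\prod_(k < i) (Q - k%:R)) / (i`!)%:R).

Definition gpoly (N : int) (Q : rat) (q j : int) : laurent := fun e =>
  if (0 <= N - q - j)%R then
    \sum_(i < (absz (N - q - j)%R).+1) binomQ Q i * mono (i%:Z + q + j) e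
  else 0.

Definition isGenO (N : int) (Q : rat) (q : int) (g : laurent) : Prop :=
  (exists i : int, (N + 1 <= i)%R /\ g =1 mono i) \/
  (exists j : int, j <= 0 /\ g =1 gpoly N Q q j).

(* f lies in O(N,Q,q;z) = linear span of the family above *)
Definition inO (N : int) (Q : rat) (q : int) (f : laurent) : Prop :=
  exists (n : nat) (c : nat -> algC) (g : nat -> laurent),
    (forall k, (k < n)%N -> isGenO N Q q (g k)) /\
    (forall e, f e = \sum_(k < n) c k * g k e).

Definition lsub (f g : laurent) : laurent := fun e => f e - g e.

Definition inBigcapO (T : nat) (N : int) (Q : 'I_T -> rat) (q : 'I_T -> int)
  (f : laurent) : Prop := forall s : 'I_T, inO N (Q s) (q s) f.

(* Main.v *)
Require Import Defs.
From HB Require Import structures.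
From mathcomp Require Import all_boot all_order all_algebra all_field.
From mathcomp Require Import zify ring.
Set Implicit Arguments. Unset Strict Implicit. Unset Printing Implicit Defensive.
Import Order.TTheory GRing.Theory Num.Theory.
Local Open Scope ring_scope.

Definition bin (x : algC) (i : nat) : algC :=
  (\prod_(k < i) (x - k%:R)) / (i`!)%:R.

Lemma bin0 x : bin x 0 = 1.
Proof. by rewrite /bin big_ord0 fact0 divr1. Qed.

Lemma binS x i : (i.+1)%:R * bin x i.+1 = (x - i%:R) * bin x i.
Proof.
rewrite /bin big_ord_recr /= factS natrM.
have h1 : (i.+1)%:R != 0 :> algC by rewrite pnatr_eq0.
have h2 : (i`!)%:R != 0 :> algC by rewrite pnatr_eq0 -lt0n fact_gt0.
by field; rewrite ?h1 ?h2 //= addrC natr1 pnatr_eq0.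
Qed.

Definition Bz (x : algC) (m : int) : algC :=
  match m with Posz n => bin x n | Negz _ => 0 end.

Lemma Bz_neg x (m : int) : m < 0 -> Bz x m = 0.
Proof. by case: m. Qed.

Lemma BzS x (m : int) : (m + 1)%:~R * Bz x (m + 1) = (x - m%:~R) * Bz x m.
Proof.
case: m => [n|n].
  have -> : (Posz n + 1) = Posz n.+1 by rewrite -addn1.
  by rewrite /= binS.
case: n => [|n].
  have -> : (Negz 0 + 1) = 0 by [].
  by rewrite mul0r /= mulr0.
have -> : (Negz n.+1 + 1) = Negz n by rewrite NegzE; lia.
by rewrite /= !mulr0.
Qed.

Lemma binQ Q i : binomQ Q i = bin (ratr Q) i.
Proof.
rewrite /binomQ /bin fmorph_div rmorph_prod rmorph_nat.
congr (_ / _); apply: eq_bigr => k _.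
by rewrite rmorphB rmorph_nat.
Qed.

Definition V a b m := \sum_(i < m.+1) bin a i * bin b (m - i).

Lemma vand_rec a b m : (m.+1)%:R * V a b m.+1 = (a + b - m%:R) * V a b m.
Proof.
rewrite /V mulr_sumr.
have -> : \sum_(i < m.+2) (m.+1)%:R * (bin a i * bin b (m.+1 - i)) =
   \sum_(i < m.+2) (i%:R * bin a i * bin b (m.+1 - i)) +
   \sum_(i < m.+2) ((m.+1 - i)%:R * bin a i * bin b (m.+1 - i)).
  rewrite -big_split; apply: eq_bigr => i _ /=.
  have hi : (i <= m.+1)%N by rewrite -ltnS.
  rewrite -{1}(subnKC hi) natrD; ring.
rewrite [X in X + _]big_ord_recl [X in _ + X]big_ord_recr /= subnn !mul0r !add0r addr0.
rewrite mulr_sumr -big_split; apply: eq_bigr => i _ /=.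
rewrite /bump /= add1n subSS binS.
have hi : (i <= m)%N by rewrite -ltnS.
rewrite subSn // [X in _ + X]mulrAC binS natrB //; ring.
Qed.

Lemma vand_inv a m : V a (- a) m = (m == 0)%:R.
Proof.
elim: m => [|m IH]; first by rewrite /V big_ord1 subnn !bin0 mulr1.
have h : (m.+1)%:R * V a (-a) m.+1 = 0.
  rewrite vand_rec IH; case: m {IH} => [|m] /=; first by rewrite subrr subr0 mul0r.
  by rewrite mulr0.
move: h => /eqP; rewrite mulf_eq0 pnatr_eq0 /= => /eqP ->.
done.
Qed.

Definition S (d : nat) (c : nat -> algC) (a : algC) (n : nat) : algC :=
  \sum_(j < d) c j * Bz a (n%:Z - j%:Z).

Definition Gop (a g : algC) (c : nat -> algC) (j : nat) : algC :=
  (j%:R + a - g) * c j + (j.+1)%:R * c j.+1.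

Lemma sum_shift (F : nat -> algC) d : F 0%N = 0 -> F d = 0 ->
  \sum_(j < d) F j.+1 = \sum_(j < d) F j.
Proof.
move=> h0 hd.
have e := @big_ord_recl _ 0 +%R d (fun j : 'I_d.+1 => F j).
rewrite big_ord_recr /= h0 hd add0r addr0 in e.
rewrite e; by apply: eq_bigr.
Qed.

Lemma K1 d c a g n : (forall j, (d <= j)%N -> c j = 0) ->
  (n.+1)%:R * S d c a n.+1 + (n%:R - g) * S d c a n = S d (Gop a g c) a n.
Proof.
move=> hc; rewrite /S /Gop !mulr_sumr -big_split /=.
have e1 : forall j : 'I_d, (n.+1)%:R * (c j * Bz a (n.+1%:Z - j%:Z)) +
     (n%:R - g) * (c j * Bz a (n%:Z - j%:Z)) =
   (j%:R + a - g) * c j * Bz a (n%:Z - j%:Z) +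
   j%:R * c j * Bz a (n.+1%:Z - j%:Z).
  move=> j; have := BzS a (n%:Z - j%:Z).
  have -> : n%:Z - j%:Z + 1 = n.+1%:Z - j%:Z by lia.
  have -> : (n.+1%:Z - j%:Z)%:~R = (n.+1)%:R - j%:R :> algC.
    by rewrite intrD intrN.
  have -> : (n%:Z - j%:Z)%:~R = n%:R - j%:R :> algC.
    by rewrite intrD intrN.
  move=> h.
  have -> : (n.+1)%:R * (c j * Bz a (n.+1%:Z - j%:Z)) =
     c j * ((n.+1%:R - j%:R) * Bz a (n.+1%:Z - j%:Z)) + j%:R * c j * Bz a (n.+1%:Z - j%:Z)
    by ring.
  rewrite h; ring.
rewrite (eq_bigr _ (fun j _ => e1 j)) big_split /=.
under [X in _ = X]eq_bigr do rewrite mulrDl.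
rewrite big_split /=; congr (_ + _).
have := @sum_shift (fun j => j%:R * c j * Bz a (n.+1%:Z - j%:Z)) d.
rewrite !mul0r hc // mulr0 mul0r => /(_ erefl erefl) <-.
apply: eq_bigr => j _; congr (_ * _ * Bz a _); lia.
Qed.

Lemma Gop_supp d a g c : (forall j, (d <= j)%N -> c j = 0) ->
  forall j, (d <= j)%N -> Gop a g c j = 0.
Proof. by move=> hc j hj; rewrite /Gop !hc ?mulr0 ?addr0 // ltnW. Qed.

Lemma Gop_inj d a g c : (forall z : int, a - g != z%:~R) ->
  (forall j, (d <= j)%N -> c j = 0) ->
  (forall j, Gop a g c j = 0) -> forall j, c j = 0.
Proof.
move=> hz hc hG.
suff: forall k j, (d <= j + k)%N -> c j = 0.
  by move=> h j; apply: (h d); rewrite leq_addl.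
elim=> [|k IH] j hj; first by apply: hc; rewrite -(addn0 j).
case: (leqP d j) => hdj; first by apply: hc.
have h1 : c j.+1 = 0 by apply: IH; rewrite addSn -addnS.
have := hG j; rewrite /Gop h1 mulr0 addr0 => /eqP; rewrite mulf_eq0.
case/orP => [/eqP h|/eqP //].
have := hz (- (j%:Z)); rewrite intrN.
have -> : a - g = - j%:R by rewrite -[RHS]add0r -h; ring.
by rewrite eqxx.
Qed.

Fixpoint Ap (a : algC) (g : nat -> algC) (k : nat) (c : nat -> algC) : nat -> algC :=
  match k with 0 => c | k'.+1 => Ap a g k' (Gop a (g k') c) end.

Lemma Ap_supp d a g k c : (forall j, (d <= j)%N -> c j = 0) ->
  forall j, (d <= j)%N -> Ap a g k c j = 0.
Proof.
elim: k c => [|k IH] c hc //=.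
by apply: IH; apply: Gop_supp.
Qed.

Lemma Ap_kill a g k c : (forall i, g i = a + i%:R) ->
  (forall j, (k <= j)%N -> c j = 0) -> forall j, Ap a g k c j = 0.
Proof.
move=> hg; elim: k c => [|k IH] c hc /=; first by move=> j; apply: hc.
apply: IH => j hj; rewrite /Gop hg.
case: (ltngtP j k) => hjk; first by rewrite ltnNge hj in hjk.
  by rewrite !hc ?mulr0 ?addr0 // ltnW.
by rewrite hjk (hc k.+1) // mulr0 addr0 opprD addrA addrK subrr mul0r.
Qed.

Lemma Ap_nz d a g k c : (forall i (z : int), a - g i != z%:~R) ->
  (forall j, (d <= j)%N -> c j = 0) ->
  (forall j, Ap a g k c j = 0) -> forall j, c j = 0.
Proof.
move=> hz; elim: k c => [|k IH] c hc //= h.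
apply: (Gop_inj (d := d) (hz k)) => //.
apply: (IH _ _ h); exact: Gop_supp.
Qed.

Lemma step_sum d M B (c : nat -> nat -> algC) (a : nat -> algC) g :
  (forall t j, (t < M)%N -> (d <= j)%N -> c t j = 0) ->
  (forall n, (n < B.+1)%N -> \sum_(t < M) S d (c t) (a t) n = 0) ->
  forall n, (n < B)%N -> \sum_(t < M) S d (Gop (a t) g (c t)) (a t) n = 0.
Proof.
move=> hc hs n hn.
rewrite (eq_bigr (fun t : 'I_M => (n.+1)%:R * S d (c t) (a t) n.+1 +
   (n%:R - g) * S d (c t) (a t) n)); last first.
  by move=> t _; rewrite K1 // => j; apply: hc.
by rewrite big_split /= -!mulr_sumr !hs ?mulr0 ?addr0 // ltnW.
Qed.

Lemma iter_sum d M k : forall B (c : nat -> nat -> algC) (a : nat -> algC) g,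
  (forall t j, (t < M)%N -> (d <= j)%N -> c t j = 0) ->
  (forall n, (n < B + k)%N -> \sum_(t < M) S d (c t) (a t) n = 0) ->
  forall n, (n < B)%N -> \sum_(t < M) S d (Ap (a t) g k (c t)) (a t) n = 0.
Proof.
elim: k => [|k IH] B c a g hc hs n hn /=.
  by apply: hs; rewrite addn0.
apply: (IH B (fun t => Gop (a t) (g k) (c t))) => //.
  by move=> t j ht hj; exact: (Gop_supp _ _ (fun j' hj' => hc t j' ht hj') hj).
move=> n' hn'; apply: (step_sum (B := B + k)) => //.
by move=> n'' h; apply: hs; rewrite addnS.
Qed.

Lemma S_zero d c a n : (forall j, c j = 0) -> S d c a n = 0.
Proof. by move=> h; rewrite /S big1 // => j _; rewrite h mul0r. Qed.

Lemma base d c a : (forall n, (n < d)%N -> S d c a n = 0) ->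
  forall j, (j < d)%N -> c j = 0.
Proof.
move=> h; elim/ltn_ind => j IH hj.
have := h j hj; rewrite /S (bigD1 (Ordinal hj)) //= subrr /= bin0 mulr1.
rewrite big1 ?addr0 // => i /= hij.
case: (ltngtP i j) => hlt.
- by rewrite IH ?mul0r // (ltn_trans hlt).
- by rewrite Bz_neg ?mulr0 // subr_lt0 ltz_nat.
- by move: hij; rewrite -val_eqE /= hlt eqxx.
Qed.

Lemma indep d m : forall (c : nat -> nat -> algC) (a : nat -> algC),
  (forall t j, (t < m)%N -> (d <= j)%N -> c t j = 0) ->
  (forall t t' (z : int), (t < m)%N -> (t' < m)%N -> t != t' -> a t - a t' != z%:~R) ->
  (forall n, (n < d * m.+1)%N -> \sum_(t < m) S d (c t) (a t) n = 0) ->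
  forall t j, (t < m)%N -> c t j = 0.
Proof.
elim: m => [|m IH] c a hc ha hs t j ht //.
pose g := fun i : nat => a m + i%:R.
have hs1 := @iter_sum d m.+1 d (d * m.+1) c a g hc.
have hs2 : forall n, (n < d * m.+1)%N ->
    \sum_(t < m.+1) S d (Ap (a t) g d (c t)) (a t) n = 0.
  apply: hs1 => n hn; apply: hs; by rewrite mulnS addnC.
have kill : forall j, Ap (a m) g d (c m) j = 0.
  by apply: Ap_kill => // j' hj'; apply: hc.
have hs3 : forall n, (n < d * m.+1)%N ->
    \sum_(t < m) S d (Ap (a t) g d (c t)) (a t) n = 0.
  move=> n hn; have := hs2 n hn; rewrite big_ord_recr /= S_zero // addr0.
  by [].
have zero' := IH (fun t => Ap (a t) g d (c t)) a.
have zlow : forall t j, (t < m)%N -> c t j = 0.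
  move=> t' j' ht'; apply: (Ap_nz (d := d) (a := a t') (g := g) (k := d)).
  - move=> i z; apply/negP => /eqP h.
    have := ha t' m (z + i%:Z) (ltn_trans ht' (ltnSn m)) (ltnSn m).
    rewrite ltn_eqF // => /(_ erefl) /negP; apply; apply/eqP.
    rewrite intrD -h /g -pmulrn; ring.
  - by move=> j'' hj''; apply: hc => //; apply: ltnW.
  - move=> j''; apply: zero' => //.
    + move=> t'' j3 ht'' hj3.
      have ht3 : (t'' < m.+1)%N by apply: ltnW.
      exact: (@Ap_supp d (a t'') g d (c t'') (fun j4 hj4 => hc t'' j4 ht3 hj4) j3 hj3).
    + by move=> t1 t2 z h1 h2 h12; apply: ha => //; apply: ltnW.
move: ht; rewrite ltnS leq_eqVlt => /orP [/eqP ->|ht]; last by apply: zlow.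
have hm : forall n, (n < d * m.+2)%N -> S d (c m) (a m) n = 0.
  move=> n hn; have := hs n hn; rewrite big_ord_recr /= big1 ?add0r //.
  by move=> t' _; apply: S_zero => j'; apply: zlow.
case: (ltnP j d) => hj; last by apply: hc.
apply: (base (d := d) (a := a m)) => // n hn; apply: hm.
by apply: (leq_trans hn); rewrite leq_pmulr.
Qed.

Lemma solve (I : finType) (n : nat) (v : I -> 'rV[algC]_n) :
  (forall l : I -> algC, \sum_i l i *: v i = 0 -> forall i, l i = 0) ->
  forall b : I -> algC, exists x : 'cV[algC]_n, forall i, (v i *m x) 0 0 = b i.
Proof.
move=> hind b.
pose A := \matrix_(r < #|I|) v (enum_val r).
have rf : row_free A.
  apply: inj_row_free => u hu.
  have h0 := hind (fun i => u 0 (enum_rank i)).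
  have : forall i, u 0 (enum_rank i) = 0.
    apply: h0; apply: (etrans _ hu); rewrite mulmx_sum_row.
    rewrite (reindex (@enum_rank I)) /=; last first.
      by exists enum_val => r _; rewrite ?enum_valK ?enum_rankK.
    by apply: eq_bigr => i _; rewrite rowK enum_rankK.
  move=> h; apply/rowP => r; rewrite mxE -(enum_valK r); exact: h.
case/row_freeP: rf => B hB.
exists (B *m \col_(r < #|I|) b (enum_val r)) => i.
have -> : v i = row (enum_rank i) A by rewrite rowK enum_rankK.
by rewrite -row_mul mulmxA hB mul1mx mxE mxE enum_rankK.
Qed.

Section InO.
Variables (N : int) (Q : rat) (q : int).

Lemma inO_ext f g : inO N Q q f -> (forall e, g e = f e) -> inO N Q q g.
Proof.
case=> n [c [g' [h1 h2]]] he; exists n, c, g'; split => // e.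
by rewrite he h2.
Qed.

Lemma inO_gen g : isGenO N Q q g -> inO N Q q g.
Proof.
move=> hg; exists 1%N, (fun _ => 1), (fun _ => g); split => // e.
by rewrite big_ord1 mul1r.
Qed.

Lemma inO_0 : inO N Q q (fun _ => 0).
Proof. by exists 0%N, (fun _ => 0), (fun _ => fun _ => 0); split => // e; rewrite big_ord0. Qed.

Lemma inO_add f g : inO N Q q f -> inO N Q q g -> inO N Q q (fun e => f e + g e).
Proof.
case=> n1 [c1 [g1 [h1 e1]]] [n2 [c2 [g2 [h2 e2]]]].
exists (n1 + n2)%N, (fun k => if (k < n1)%N then c1 k else c2 (k - n1)%N),
  (fun k => if (k < n1)%N then g1 k else g2 (k - n1)%N); split.
  move=> k hk; case: ifP => hk1; first exact: h1.
  apply: h2; rewrite ltn_subLR //; by rewrite leqNgt hk1.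
move=> e; rewrite big_split_ord /= e1 e2; congr (_ + _).
  by apply: eq_bigr => i _ /=; rewrite ltn_ord.
apply: eq_bigr => i _ /=; rewrite ltnNge leq_addr /=.
by rewrite addKn.
Qed.

Lemma inO_scale a f : inO N Q q f -> inO N Q q (fun e => a * f e).
Proof.
case=> n [c [g [h1 h2]]]; exists n, (fun k => a * c k), g; split => // e.
by rewrite h2 mulr_sumr; apply: eq_bigr => i _; rewrite mulrA.
Qed.

Lemma inO_sum n (F : nat -> laurent) : (forall i, (i < n)%N -> inO N Q q (F i)) ->
  inO N Q q (fun e => \sum_(i < n) F i e).
Proof.
elim: n => [|n IH] h.
  by apply: (inO_ext inO_0) => e; rewrite big_ord0.
apply: (inO_ext (inO_add (IH (fun i hi => h i (ltnW hi))) (h n (ltnSn n)))).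
by move=> e; rewrite big_ord_recr.
Qed.

End InO.

Lemma conv x n p W : (n < W.+1)%N ->
  \sum_(j < W.+1) (if (p <= j)%N then Bz (- x) (n%:Z - j%:Z) * bin x (j - p) else 0)
  = (n == p)%:R.
Proof.
move=> hn.
case: (ltnP n p) => hnp.
  rewrite big1; first by rewrite ltn_eqF.
  move=> j _; case: ifP => // hpj.
  by rewrite Bz_neg ?mul0r // subr_lt0 ltz_nat (leq_trans hnp).
rewrite -(big_mkord xpredT (fun j => if (p <= j)%N then Bz (- x) (n%:Z - j%:Z) * bin x (j - p) else 0)).
rewrite (big_cat_nat _ (n := p)) //=; last by apply: (leq_trans hnp); apply: ltnW.
rewrite big_nat_cond big1 ?add0r; last first.
  by move=> j /andP [/andP [_ hj] _]; rewrite leqNgt hj.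
rewrite (big_cat_nat _ (n := n.+1)) //=; last exact: leqW.
rewrite [X in _ + X]big_nat_cond [X in _ + X]big1 ?addr0; last first.
  move=> j /andP [/andP [hj _] _]; case: ifP => // _.
  by rewrite Bz_neg ?mul0r // subr_lt0 ltz_nat.
rewrite -{1}(add0n p) big_addn.
set m := (n - p)%N.
have hm : (n.+1 - p = m.+1)%N by rewrite /m subSn.
rewrite hm big_mkord.
have -> : (n == p) = (m == 0%N) by rewrite /m subn_eq0 eqn_leq hnp andbT.
rewrite -(vand_inv x m) /V.
apply: eq_bigr => i _.
rewrite leq_addl addnK mulrC.
have hi : (i <= m)%N by rewrite -ltnS.
have hmd : m = (n - p)%N by [].
clearbody m.
have -> : n%:Z - (i + p)%N%:Z = Posz (m - i)%N by lia.
by [].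
Qed.

Lemma gpoly_high N Q q j e : N < e -> gpoly N Q q j e = 0.
Proof.
move=> he; rewrite /gpoly; case: ifP => // h0.
apply: big1 => i _; rewrite /mono.
have hi : (i : int) <= N - q - j.
  have := ltn_ord i; rewrite ltnS => hi.
  have : Posz (absz (N - q - j)%R) = N - q - j by rewrite gez0_abs.
  lia.
have -> : (e == i%:Z + q + j) = false by apply/negP => /eqP; lia.
by rewrite mulr0.
Qed.

Lemma gpoly_low N Q q (j p : nat) :
  gpoly N Q q (N - j%:Z - q) (N - p%:Z) =
  if (p <= j)%N then bin (ratr Q) (j - p) else 0.
Proof.
rewrite /gpoly.
have -> : N - q - (N - j%:Z - q) = j%:Z by ring.
rewrite lez_nat /=.
have hm : forall i : nat, (N - p%:Z == i%:Z + q + (N - j%:Z - q)) = (i + p == j)%N.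
  move=> i; apply/eqP/eqP; lia.
case: leqP => hpj.
  rewrite (bigD1 (Ordinal (leq_ltn_trans (leq_subr p j) (ltnSn j)))) //=.
  rewrite /mono hm subnK // eqxx mulr1 binQ big1 ?addr0 // => i hi.
  rewrite hm; case: eqP => [h|]; last by rewrite mulr0.
  by move: hi; rewrite -val_eqE /= => /eqP hne; exfalso; apply: hne; lia.
apply: big1 => i _; rewrite /mono hm.
case: eqP => [h|]; last by rewrite mulr0.
have := ltn_ord i; lia.
Qed.

Lemma mono_sum (M1 : nat) (N e : int) (u : int -> algC) :
  \sum_(i < M1) u (N + 1 + i%:Z) * mono (N + 1 + i%:Z) e =
  if (N < e) && (e <= N + M1%:Z) then u e else 0.
Proof.
case: ifP => he.
  have hi : (absz (e - N - 1)%R < M1)%N.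
    move/andP: he => [h1 h2]; lia.
  rewrite (bigD1 (Ordinal hi)) //= big1 ?addr0.
    have -> : N + 1 + (absz (e - N - 1)%R)%:Z = e.
      move/andP: he => [h1 h2]; lia.
    by rewrite /mono eqxx mulr1.
  move=> i hne; rewrite /mono; case: eqP => [h|]; last by rewrite mulr0.
  move: hne; rewrite -val_eqE /= => /eqP hne; exfalso; apply: hne; lia.
apply: big1 => i _; rewrite /mono; case: eqP => [h|]; last by rewrite mulr0.
have hi := ltn_ord i; move/negP: he => he; exfalso; apply: he; apply/andP; lia.
Qed.

Lemma factA N Q q W h : is_laurent h ->
  (forall k, k < N - W%:Z -> h k = 0) ->
  (forall j : nat, j%:Z < N - q ->
     \sum_(n < W.+1) h (N - n%:Z) * Bz (- ratr Q) (n%:Z - j%:Z) = 0) ->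
  inO N Q q h.
Proof.
case=> M hM hlow hphi.
pose psi (j : nat) := \sum_(n < W.+1) h (N - n%:Z) * Bz (- ratr Q) (n%:Z - j%:Z).
pose M1 := (M + absz N)%N.
have A1 : inO N Q q (fun e => \sum_(i < M1) h (N + 1 + i%:Z) * mono (N + 1 + i%:Z) e).
  apply: (inO_sum (F := fun i e => h (N + 1 + i%:Z) * mono (N + 1 + i%:Z) e)).
  move=> i _; apply: inO_scale; apply: inO_gen; left.
  by exists (N + 1 + i%:Z); split => //; lia.
have A2 : inO N Q q (fun e => \sum_(j < W.+1) psi j * gpoly N Q q (N - j%:Z - q) e).
  apply: (inO_sum (F := fun j e => psi j * gpoly N Q q (N - j%:Z - q) e)).
  move=> j _; case: (lerP (N - j%:Z - q) 0) => hj.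
    apply: inO_scale; apply: inO_gen; right.
    by exists (N - j%:Z - q).
  have -> : psi j = 0 by apply: hphi; lia.
  by apply: (inO_ext (inO_0 N Q q)) => e; rewrite mul0r.
apply: (inO_ext (inO_add A1 A2)) => e /=.
rewrite mono_sum.
case: (ltrP N e) => hNe /=.
  rewrite big1 ?addr0; last by move=> j _; rewrite gpoly_high ?mulr0.
  case: ifP => // he.
  apply: hM; move/negbT: he; rewrite -ltNge => he; lia.
rewrite add0r.
pose p := absz (N - e)%R.
have hep : e = N - p%:Z by rewrite /p; lia.
rewrite hep.
under eq_bigr do rewrite gpoly_low.
rewrite /psi.
under eq_bigr do rewrite mulr_suml.
rewrite exchange_big /=.
under eq_bigr => n _.
  rewrite (eq_bigr (fun j : 'I_W.+1 => h (N - n%:Z) *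
     (if (p <= j)%N then Bz (- ratr Q) (n%:Z - j%:Z) * bin (ratr Q) (j - p) else 0))); last first.
    by move=> j _; case: ifP => _; [rewrite mulrA | rewrite !mulr0].
  rewrite -mulr_sumr conv //.
  over.
case: (ltnP p W.+1) => hpW.
  rewrite (bigD1 (Ordinal hpW)) //= eqxx mulr1 big1 ?addr0 // => i hi.
  move: hi; rewrite -val_eqE /= => /negbTE ->.
  by rewrite mulr0.
rewrite hlow; last by lia.
rewrite big1 // => i _.
by rewrite ltn_eqF ?mulr0 // (leq_trans (ltn_ord i)).
Qed.

Lemma surj (T' : nat) (N : int) (q : 'I_T'.+1 -> int) (Q : 'I_T'.+1 -> rat)
  (hQ : forall i j : 'I_T'.+1, i != j -> ~ exists z : int, Q i - Q j = z%:~R)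
  (fs : 'I_T'.+1 -> laurent) (hfs : forall s, is_laurent (fs s)) :
  exists f : laurent, is_laurent f /\
    forall s : 'I_T'.+1, inO N (Q s) (q s) (lsub f (fs s)).
Proof.
have [Mf hMf] := fin_all_exists hfs.
pose Ms := (\sum_(s < T'.+1) Mf s)%N.
have hMs : forall s, (Mf s <= Ms)%N.
  by move=> s; rewrite /Ms (bigD1 s) //= leq_addr.
pose d := (\sum_(s < T'.+1) absz (N - q s)%R).+1.
have hd : forall s, N - q s < d%:Z.
  move=> s; have : (absz (N - q s)%R < d)%N.
    by rewrite ltnS /d (bigD1 s) //= leq_addr.
  lia.
pose W := (absz N + Ms + d * T'.+2)%N.
pose a (s : 'I_T'.+1) := - ratr (Q s) : algC.
pose v (i : ('I_T'.+1 * 'I_d)%type) : 'rV[algC]_W.+1 :=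
  \row_(n < W.+1) Bz (a i.1) (n%:Z - (i.2 : nat)%:Z).
have hind : forall l : ('I_T'.+1 * 'I_d)%type -> algC,
    \sum_i l i *: v i = 0 -> forall i, l i = 0.
  move=> l hl.
  pose c (t j : nat) := if (j < d)%N then l (inord t, inord j) else 0.
  pose aa (t : nat) := a (inord t).
  have hsum : forall n, (n < d * T'.+2)%N ->
      \sum_(t < T'.+1) S d (c t) (aa t) n = 0.
    move=> n hn.
    have hnW : (n < W.+1)%N.
      by rewrite ltnS (leq_trans (ltnW hn)) // /W leq_addl.
    have := congr1 (fun A : 'rV_W.+1 => A 0 (Ordinal hnW)) hl.
    rewrite summxE mxE => hl0; apply: (etrans _ hl0).
    rewrite (eq_bigr (fun t : 'I_T'.+1 => \sum_(j < d) (l (t,j) *: v (t,j)) 0 (Ordinal hnW))); last first.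
      move=> t _; rewrite /S; apply: eq_bigr => j _.
      by rewrite /c ltn_ord !inord_val !mxE /aa inord_val.
    by rewrite pair_big /=; apply: eq_bigr => [[t j]] _.
  have zero := @indep d T'.+1 c aa.
  have hz : forall t j, (t < T'.+1)%N -> c t j = 0.
    apply: zero => //; first by move=> t j' _ hj'; rewrite /c ltnNge hj'.
    move=> t t' z ht ht' htt'; apply/negP => /eqP h.
    apply: (hQ (inord t') (inord t)).
      apply/negP => /eqP /(congr1 val); rewrite /= !inordK // => htt.
      by move: htt'; rewrite htt eqxx.
    exists z; apply: (fmorph_inj (ratr : rat -> algC)).
    rewrite rmorphB rmorph_int -h /aa /a; ring.
  by move=> [s j]; have := hz s j (ltn_ord s); rewrite /c ltn_ord !inord_val.
have [x hx] := solve hind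
  (fun i => \sum_(n < W.+1) fs i.1 (N - n%:Z) * Bz (a i.1) (n%:Z - (i.2 : nat)%:Z)).
pose f (k : int) := if (N - W%:Z <= k) && (k <= N)
  then x (inord (absz (N - k)%R)) 0 else 0.
exists f; split.
  exists (absz N + W)%N => e he; rewrite /f; case: ifP => // /andP [h1 h2].
  exfalso; lia.
move=> s; apply: (factA (W := W)).
- case: (hfs s) => Ms' hMs'.
  exists (absz N + W + Ms')%N => e he; rewrite /lsub /f hMs'; last by lia.
  case: ifP => [/andP [h1 h2]|_]; last by rewrite subr0.
  exfalso; lia.
- move=> k hk; rewrite /lsub /f hMf.
    by case: ifP => [/andP [h1 h2]|_]; [exfalso; lia | rewrite subr0].
  have := hMs s; lia.
- move=> j hj.
  have hjd : (j < d)%N by have := hd s; lia.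
  have := hx (s, Ordinal hjd); rewrite mxE /=.
  under eq_bigr do rewrite mxE.
  move=> hx'.
  rewrite /lsub; under eq_bigr do rewrite mulrBl.
  rewrite sumrB -hx'; apply/eqP; rewrite subr_eq0; apply/eqP.
  apply: eq_bigr => n _.
  have hn : (N - W%:Z <= N - n%:Z) && (N - n%:Z <= N).
    have := ltn_ord n; move=> hn; apply/andP; lia.
  rewrite /f hn mulrC.
  have -> : absz (N - (N - n%:Z))%R = n by lia.
  by rewrite inord_val.
Qed.

Unset Implicit Arguments.

Theorem mainTheorem5 (T : nat) (hT : (0 < T)%N) (N : int)
  (q : 'I_T -> int) (Q : 'I_T -> rat)
  (hQ : forall i j : 'I_T, i != j -> ~ exists z : int, Q i - Q j = z%:~R) :
  (* well defined and injective: [f] = [g] in the source iff all components agree *)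
  (forall f g : laurent, is_laurent f -> is_laurent g ->
     (inBigcapO N Q q (lsub f g) <->
      forall s : 'I_T, inO N (Q s) (q s) (lsub f g))) /\
  (* surjective *)
  (forall fs : 'I_T -> laurent, (forall s, is_laurent (fs s)) ->
     exists f : laurent, is_laurent f /\
       forall s : 'I_T, inO N (Q s) (q s) (lsub f (fs s))).
Proof.
split.
  by move=> f g _ _; rewrite /inBigcapO; split.
case: T hT q Q hQ => // T' _ q Q hQ fs hfs.
exact: surj.
Qed.
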